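(* Let $C$ be a small category. If there is a non-identity morphism $X\to Y$ in $Sd(C)$, then $\dim(X)<\dim(Y)$, where $\dim$ of a simplex is its dimension $q_X$.
   Context: For $q\ge0$, $[q]=\{0<\dots<q\}$ viewed as a category. A $q$-simplex of the nerve $NC$ is a functor $X:[q]\to C$ (a chain of $q$ composable arrows); $q_X=q$ is its dimension. It is degenerate if $X=Y\circ s$ for a simplex $Y$ and surjective order-preserving $s:[q]\to[p]$ with $p<q$ (equivalently some arrow $X_{i-1}\to X_i$ is an identity), non-degenerate otherwise. $\Delta/C$ has all simplices as objects and as morphisms $X\to Y$ the order-preserving $\xi:[q_X]\to[q_Y]$ with $Y\circ\xi=X$, written $\xi_*$. For a $q$-simplex $X$ and surjective order-preserving $s:[q+1]\to[q]$ with order-preserving right inverses $d,d'$, $d_*,d'_*:X\to X\circ s$ are elementary equivalent; $\sim$ is the smallest equivalence relation on morphisms of $\Delta/C$ compatible with composition containing these pairs; $[\Delta/C]$ is the quotient category; $Sd(C)$ is the full subcategory of $[\Delta/C]$ on the non-degenerate simplices. *)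

(* Defs.v *)
From Stdlib Require Import List Arith.
Import ListNotations.

(* A small category, presented single-sorted: a type of objects, a type of
   arrows with domain/codomain, identities and composition
   (comp g f = g o f, defined when cod f = dom g). *)
Record Category := {
  Ob : Type;
  Arr : Type;
  dom : Arr -> Ob;
  cod : Arr -> Ob;
  idc : Ob -> Arr;
  comp : Arr -> Arr -> Arr;
  dom_id : forall x, dom (idc x) = x;
  cod_id : forall x, cod (idc x) = x;
  dom_comp : forall f g, cod f = dom g -> dom (comp g f) = dom f;
  cod_comp : forall f g, cod f = dom g -> cod (comp g f) = cod g;
  comp_id_r : forall f, comp f (idc (dom f)) = f;
  comp_id_l : forall f, comp (idc (cod f)) f = f;
  comp_assoc : forall f g h, cod f = dom g -> cod g = dom h ->
      comp h (comp g f) = comp (comp h g) f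
}.

Section Nerve.
Variable C : Category.

(* A q-simplex X : [q] -> C, given as its chain of q composable arrows
   X_0 -> X_1 -> ... -> X_q (the starting object X_0 plus the arrows).
   A functor [q] -> C is uniquely determined by this chain, so Leibniz
   equality of (valid) chains is equality of functors. *)
Record simplex := { s0 : Ob C; sarr : list (Arr C) }.

Definition dim (X : simplex) : nat := length (sarr X).

Fixpoint chain (x : Ob C) (l : list (Arr C)) : Prop :=
  match l with
  | [] => True
  | a :: l' => dom C a = x /\ chain (cod C a) l'
  end.

Definition valid (X : simplex) : Prop := chain (s0 X) (sarr X).

Definition obj (X : simplex) (i : nat) : Ob C :=
  match i with
  | 0 => s0 X
  | S k => cod C (nth k (sarr X) (idc C (s0 X)))
  end.

(* the arrow X(j <= k) : X_j -> X_k, composite of the arrows j+1, ..., k *)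
Definition seg (X : simplex) (j k : nat) : Arr C :=
  fold_left (fun acc a => comp C a acc)
            (firstn (k - j) (skipn j (sarr X))) (idc C (obj X j)).

Definition precomp (Y : simplex) (xi : nat -> nat) (q : nat) : simplex :=
  {| s0 := obj Y (xi 0);
     sarr := map (fun i => seg Y (xi i) (xi (S i))) (seq 0 q) |}.

Definition order_pres (xi : nat -> nat) (q p : nat) : Prop :=
  (forall i, i <= q -> xi i <= p) /\
  (forall i j, i <= j -> j <= q -> xi i <= xi j).

Definition surj_op (s : nat -> nat) (q p : nat) : Prop :=
  order_pres s q p /\ (forall j, j <= p -> exists i, i <= q /\ s i = j).

Definition degenerate (X : simplex) : Prop :=
  exists (Y : simplex) (s : nat -> nat),
    valid Y /\ dim Y < dim X /\ surj_op s (dim X) (dim Y) /\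
    precomp Y s (dim X) = X.

Definition nondegenerate (X : simplex) : Prop := valid X /\ ~ degenerate X.

(* xi_* : X -> Y is a morphism of Delta/C (xi only matters on [q_X]) *)
Definition is_mor (X Y : simplex) (xi : nat -> nat) : Prop :=
  valid X /\ valid Y /\ order_pres xi (dim X) (dim Y) /\
  precomp Y xi (dim X) = X.

(* The smallest equivalence relation on morphisms of Delta/C (relating
   parallel morphisms X -> Y), compatible with composition, containing the
   elementary equivalences d_* ~ d'_* : X -> X o s. *)
Inductive msim : simplex -> simplex -> (nat -> nat) -> (nat -> nat) -> Prop :=
  | msim_refl : forall X Y xi xi',
      is_mor X Y xi -> (forall i, i <= dim X -> xi i = xi' i) ->
      msim X Y xi xi'
  | msim_elem : forall X q s d d',
      valid X -> dim X = q ->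
      surj_op s (S q) q ->
      order_pres d q (S q) -> (forall i, i <= q -> s (d i) = i) ->
      order_pres d' q (S q) -> (forall i, i <= q -> s (d' i) = i) ->
      msim X (precomp X s (S q)) d d'
  | msim_sym : forall X Y xi xi', msim X Y xi xi' -> msim X Y xi' xi
  | msim_trans : forall X Y xi1 xi2 xi3,
      msim X Y xi1 xi2 -> msim X Y xi2 xi3 -> msim X Y xi1 xi3
  | msim_postcomp : forall X Y Z xi xi' eta,
      msim X Y xi xi' -> is_mor Y Z eta ->
      msim X Z (fun i => eta (xi i)) (fun i => eta (xi' i))
  | msim_precomp : forall W X Y xi xi' eta,
      msim X Y xi xi' -> is_mor W X eta ->
      msim W Y (fun i => xi (eta i)) (fun i => xi' (eta i)).

End Nerve.

Arguments dim {C}.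
Arguments valid {C}.
Arguments nondegenerate {C}.
Arguments is_mor {C}.
Arguments msim {C}.

(* Main.v *)
Require Import Defs.
From Stdlib Require Import List Arith Lia.
Import ListNotations.

Arguments sarr {C}.
Arguments s0 {C}.
Section S.
Variable C : Category.

Lemma chain_dom (x : Ob C) (l : list (Arr C)) j d d' :
  chain C x l -> j < length l ->
  dom C (nth j l d) = match j with 0 => x | S k => cod C (nth k l d') end.
Proof.
  revert x j; induction l as [|a l IH]; intros x j Hc Hj; simpl in *; [lia|].
  destruct Hc as [Ha Hc]. destruct j as [|j]; auto.
  rewrite (IH _ j Hc ltac:(lia)). destruct j; auto.
Qed.

Lemma dom_nth (Z : simplex C) j d : valid Z -> j < dim Z ->
  dom C (nth j (sarr Z) d) = obj C Z j.
Proof.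
  intros Hv Hj. unfold valid, dim in *.
  rewrite (chain_dom _ _ j d (idc C (s0 Z)) Hv Hj). destruct j; reflexivity.
Qed.

Lemma seg_succ (Z : simplex C) j d : valid Z -> j < dim Z ->
  seg C Z j (S j) = nth j (sarr Z) d.
Proof.
  intros Hv Hj. unfold seg. replace (S j - j) with 1 by lia.
  unfold dim in Hj.
  assert (E : skipn j (sarr Z) = nth j (sarr Z) d :: skipn (S j) (sarr Z)).
  { clear Hv. generalize (sarr Z) j Hj. induction l; intros k Hk; simpl in *; [lia|].
    destruct k; auto. apply IHl; lia. }
  rewrite E. simpl. rewrite <- (dom_nth Z j d Hv Hj). apply comp_id_r.
Qed.

Lemma seg_same (Z : simplex C) j : seg C Z j j = idc C (obj C Z j).
Proof. unfold seg. rewrite Nat.sub_diag. reflexivity. Qed.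

Lemma map_seq_eq (f : nat -> Arr C) (l : list (Arr C)) n d :
  length l = n -> (forall j, j < n -> f j = nth j l d) -> map f (seq 0 n) = l.
Proof.
  intros Hl H. apply nth_ext with (d := f 0) (d' := d).
  - rewrite length_map, length_seq; auto.
  - intros j Hj. rewrite length_map, length_seq in Hj.
    rewrite map_nth, seq_nth by lia. simpl. auto.
Qed.

Lemma precomp_id (Y : simplex C) : valid Y -> precomp C Y (fun i => i) (dim Y) = Y.
Proof.
  intros Hv. destruct Y as [y0 l]. unfold precomp. simpl. f_equal.
  apply map_seq_eq with (d := idc C y0); auto.
  intros j Hj. apply (seg_succ (Build_simplex C y0 l)); auto.
Qed.

Lemma chain_del x l1 a l2 : dom C a = cod C a ->
  chain C x (l1 ++ a :: l2) -> chain C x (l1 ++ l2).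
Proof.
  intros Ha. revert x; induction l1 as [|b l1 IH]; intros x H; simpl in *.
  - destruct H as [H1 H2]. rewrite <- Ha, H1 in H2. auto.
  - destruct H; split; auto.
Qed.

Lemma degen_of_id (X : simplex C) i o : valid X -> i < dim X ->
  nth i (sarr X) (idc C (s0 X)) = idc C o -> degenerate C X.
Proof.
  intros Hv Hi Hid. set (l := sarr X) in *. set (n := dim X).
  assert (Hn : length l = n) by reflexivity.
  set (d := idc C (s0 X)) in *.
  assert (Hsplit : l = firstn i l ++ nth i l d :: skipn (S i) l).
  { clear -Hi Hn. assert (i < length l) by lia. clear Hi Hn. revert i H.
    induction l; intros k Hk; simpl in *; [lia|]. destruct k; simpl; auto.
    f_equal. apply IHl; lia. }
  assert (Hfl : length (firstn i l) = i) by (rewrite length_firstn; lia).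
  assert (Hsl : length (skipn (S i) l) = n - S i) by (rewrite length_skipn; lia).
  set (Y' := Build_simplex C (s0 X) (firstn i l ++ skipn (S i) l)).
  assert (Ho : o = obj C X i).
  { rewrite <- (dom_nth X i d Hv Hi). fold l. rewrite Hid, dom_id. auto. }
  assert (HobjY : obj C Y' i = obj C X i).
  { destruct i as [|k]; [reflexivity|]. unfold obj, Y'; cbn [sarr s0]. f_equal.
    rewrite app_nth1 by lia. fold l.
    rewrite Hsplit at 2. rewrite app_nth1 by lia.
    reflexivity. }
  exists Y', (fun j => if j <=? i then j else j - 1).
  assert (HdY : dim Y' = n - 1) by (unfold dim, Y'; cbn [sarr]; rewrite length_app; lia).
  assert (HvY : valid Y').
  { unfold valid, Y'; cbn [s0 sarr]. apply (chain_del _ _ (nth i l d)).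
    + rewrite Hid, dom_id, cod_id; auto.
    + rewrite <- Hsplit. exact Hv. }
  split; [|split; [|split]].
  - exact HvY.
  - rewrite HdY. fold n. lia.
  - rewrite HdY. fold n. split; [split|].
    + intros j Hj. destruct (Nat.leb_spec j i); lia.
    + intros a b Hab Hb. destruct (Nat.leb_spec a i), (Nat.leb_spec b i); lia.
    + intros j Hj. destruct (Nat.leb_spec j i).
      * exists j. split; [lia|]. destruct (Nat.leb_spec j i); lia.
      * exists (S j). split; [lia|]. destruct (Nat.leb_spec (S j) i); lia.
  - assert (EX : X = Build_simplex C (s0 X) l) by (destruct X; reflexivity).
    rewrite EX at 2. unfold precomp. f_equal.
    apply map_seq_eq with (d := d); [reflexivity|].
    intros j Hj. fold n in Hj.
    destruct (Nat.lt_trichotomy j i) as [Hlt|[Heq|Hgt]].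
    + destruct (Nat.leb_spec j i); [|lia]. destruct (Nat.leb_spec (S j) i); [|lia].
      rewrite (seg_succ Y' j d HvY) by lia. unfold Y'; cbn [sarr]. rewrite app_nth1 by lia.
      rewrite Hsplit at 2. rewrite app_nth1 by lia. reflexivity.
    + subst j. destruct (Nat.leb_spec i i); [|lia]. destruct (Nat.leb_spec (S i) i); [lia|].
      replace (S i - 1) with i by lia. rewrite seg_same.
      rewrite Hid, HobjY, Ho. reflexivity.
    + destruct (Nat.leb_spec j i); [lia|]. destruct (Nat.leb_spec (S j) i); [lia|].
      replace (S j - 1) with (S (j - 1)) by lia.
      rewrite (seg_succ Y' (j-1) d HvY) by lia. unfold Y'; cbn [sarr].
      rewrite app_nth2 by lia. rewrite Hfl. rewrite nth_skipn.
      f_equal. lia.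
Qed.

Lemma pigeon (xi : nat -> nat) p q : order_pres xi p q -> q <= p ->
  (exists i, i < p /\ xi i = xi (S i)) \/ (p = q /\ forall i, i <= p -> xi i = i).
Proof.
  intros [Hb Hm] Hqp.
  assert (D : forall n, (exists i, i < n /\ xi i = xi (S i)) \/
                        (forall i, i < n -> xi i <> xi (S i))).
  { induction n as [|n IH].
    - right; intros; lia.
    - destruct IH as [[i [Hi He]]|H].
      + left; exists i; split; auto; lia.
      + destruct (Nat.eq_dec (xi n) (xi (S n))).
        * left; exists n; split; auto.
        * right; intros i Hi. destruct (Nat.eq_dec i n); [subst; auto|]. apply H; lia. }
  destruct (D p) as [L|R]; [left; auto|right].
  assert (K : forall j i, i <= j -> j <= p -> xi i + (j - i) <= xi j).
  { induction j as [|j IH]; intros i Hij Hj.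
    - assert (i = 0) by lia. subst. simpl. lia.
    - destruct (Nat.eq_dec i (S j)); [subst; rewrite Nat.sub_diag; lia|].
      specialize (IH i ltac:(lia) ltac:(lia)).
      specialize (Hm j (S j) ltac:(lia) Hj). specialize (R j ltac:(lia)). lia. }
  assert (Hp := Hb p (le_n p)).
  assert (K0 := K p 0 ltac:(lia) (le_n p)).
  split; [lia|]. intros i Hi.
  pose proof (K p i Hi (le_n p)). pose proof (K i 0 ltac:(lia) Hi). lia.
Qed.

End S.

Theorem lemma19 (C : Category) (X Y : simplex C) (xi : nat -> nat) :
  nondegenerate X -> nondegenerate Y -> is_mor X Y xi ->
  ~ (X = Y /\ msim X Y xi (fun i => i)) ->
  dim X < dim Y.
Proof.
  intros [HvX HnX] [HvY HnY] Hmor Hnot.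
  pose proof Hmor as [_ [_ [Hop Hpre]]].
  destruct (Nat.lt_ge_cases (dim X) (dim Y)) as [H|H]; auto. exfalso.
  destruct (pigeon xi (dim X) (dim Y) Hop H) as [[i [Hi He]]|[Hpq Hid]].
  - apply HnX. apply (degen_of_id C X i (obj C Y (xi i)) HvX Hi).
    rewrite <- Hpre at 1. unfold precomp. simpl.
    rewrite nth_indep with (d' := (fun k => seg C Y (xi k) (xi (S k))) 0) by (rewrite length_map, length_seq; auto).
    rewrite (map_nth (fun k => seg C Y (xi k) (xi (S k))) (seq 0 (dim X)) 0 i).
    rewrite seq_nth by auto. simpl. rewrite <- He. apply seg_same.
  - apply Hnot.
    assert (XY : X = Y).
    { rewrite <- Hpre. rewrite <- (precomp_id C Y HvY) at 2. rewrite <- Hpq.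
      unfold precomp. rewrite (Hid 0) by lia. f_equal.
      apply map_ext_in. intros a Ha. apply in_seq in Ha.
      rewrite (Hid a), (Hid (S a)) by lia. reflexivity. }
    split; auto. apply msim_refl; auto.
Qed.
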